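(* Let $H$ be a complex Hadamard matrix, let $\{C_1,\dots,C_t\}$ be a partition of the set of columns of $H$, and let $\{R,R_1\}$ be a partition of the set of rows of $H$. For $1\le i\le t$ let $M_{1i}$ denote the submatrix of $H$ with rows $R_1$ and columns $C_i$. Suppose that for all $i\neq j$, every column of $M_{1i}$ is orthogonal (with respect to the standard Hermitian inner product) to every column of $M_{1j}$. Then for any choice of $a_1,\dots,a_t\in\mathbb{T}$, the matrix obtained from $H$ by replacing each $M_{1i}$ by $a_iM_{1i}$ (all other entries unchanged) is a complex Hadamard matrix. In particular, for any single index $i$ and any $a\in\mathbb{T}$, replacing $M_{1i}$ by $aM_{1i}$ yields a complex Hadamard matrix.
   Context: $\mathbb{T}$ is the set of complex numbers of modulus $1$. A complex Hadamard matrix of order $n$ is an $n\times n$ matrix $H$ with all entries in $\mathbb{T}$ and $HH^{\ast}=nI_n$ (equivalently, its columns are pairwise orthogonal). *)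

(* Defs.v *)
(* Complex numbers: an arbitrary numClosedFieldType C
   (e.g. the complex numbers); T = {z : C | `|z| = 1}. *)
From HB Require Import structures.
From mathcomp Require Import all_boot all_order all_algebra.
Set Implicit Arguments. Unset Strict Implicit. Unset Printing Implicit Defensive.
Import Order.TTheory GRing.Theory Num.Theory.
Local Open Scope ring_scope.

Definition complex_hadamard (C : numClosedFieldType) (n : nat) (H : 'M[C]_n) : Prop :=
  (forall i j, `|H i j| = 1) /\
  H *m (map_mx Num.conj H)^T = (n%:R : C)%:M.

Definition col_inner (C : numClosedFieldType) (n : nat) (H : 'M[C]_n)
  (S : {set 'I_n}) (k l : 'I_n) : C :=
  \sum_(r in S) H r k * Num.conj (H r l).

(* H with, for each column class i (columns k with cls k = i), the block with rows
   in R1 multiplied by a i. *)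
Definition scale_blocks (C : numClosedFieldType) (n t : nat) (H : 'M[C]_n)
  (R1 : {set 'I_n}) (cls : 'I_n -> 'I_t) (a : 'I_t -> C) : 'M[C]_n :=
  \matrix_(r, k) (if r \in R1 then a (cls k) * H r k else H r k).

(* Main.v *)
Require Import Defs.
From HB Require Import structures.
From mathcomp Require Import all_boot all_order all_algebra.
Import Order.TTheory GRing.Theory Num.Theory.
Local Open Scope ring_scope.

Lemma mulmxC_scal (C : numClosedFieldType) (n : nat) (A B : 'M[C]_n) :
  A *m B = (n%:R : C)%:M -> B *m A = (n%:R : C)%:M.
Proof.
case: n A B => [|n] A B AB.
  by apply/matrixP => -[].
have nz : (n.+1%:R : C) != 0 by rewrite pnatr_eq0.
have h : A *m ((n.+1%:R)^-1 *: B) = 1%:M.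
  by rewrite -scalemxAr AB scale_scalar_mx mulVf.
have := mulmx1C h; rewrite -scalemxAl => h2.
have -> : B *m A = n.+1%:R *: ((n.+1%:R)^-1 *: (B *m A)).
  by rewrite scalerA divff // scale1r.
by rewrite h2 scalemx1.
Qed.

Lemma had_cols (C : numClosedFieldType) (n : nat) (H : 'M[C]_n) :
  H *m (map_mx Num.conj H)^T = (n%:R : C)%:M ->
  forall k l, \sum_r H r k * Num.conj (H r l) = (n%:R : C) *+ (k == l).
Proof.
move=> /mulmxC_scal h k l.
have := congr1 (fun M : 'M[C]_n => M^T k l) h.
rewrite trmx_mul trmxK tr_scalar_mx !mxE /=.
by move=> <-; apply: eq_bigr => r _; rewrite !mxE.
Qed.

Lemma cols_had (C : numClosedFieldType) (n : nat) (G : 'M[C]_n) :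
  (forall k l, \sum_r G r k * Num.conj (G r l) = (n%:R : C) *+ (k == l)) ->
  G *m (map_mx Num.conj G)^T = (n%:R : C)%:M.
Proof.
move=> h; apply: mulmxC_scal.
have e : G^T *m map_mx Num.conj G = (n%:R : C)%:M.
  apply/matrixP => k l; rewrite !mxE -h.
  by apply: eq_bigr => r _; rewrite !mxE.
have := congr1 trmx e; rewrite trmx_mul tr_scalar_mx => <-.
by rewrite trmxK.
Qed.

Theorem theorem6p3 (C : numClosedFieldType) (n t : nat) (H : 'M[C]_n)
  (cls : 'I_n -> 'I_t) (R1 : {set 'I_n}) :
  complex_hadamard H ->
  (forall k l : 'I_n, cls k != cls l -> col_inner H R1 k l = 0) ->
  (forall a : 'I_t -> C, (forall i, `|a i| = 1) ->
     complex_hadamard (scale_blocks H R1 cls a)) /\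
  (forall (i : 'I_t) (a : C), `|a| = 1 ->
     complex_hadamard (scale_blocks H R1 cls (fun j => if j == i then a else 1))).
Proof.
move=> [Hn Hh] orth.
have main : forall a : 'I_t -> C, (forall i, `|a i| = 1) ->
     complex_hadamard (scale_blocks H R1 cls a).
  move=> a Ha; split.
    by move=> i j; rewrite !mxE; case: ifP => _; rewrite ?normrM ?Ha ?Hn ?mul1r.
  apply: cols_had => k l.
  rewrite -(@had_cols _ _ H Hh k l) (bigID (fun r => r \in R1)) [RHS](bigID (fun r => r \in R1)) /=.
  congr (_ + _); last first.
    by apply: eq_bigr => r /negbTE rR; rewrite !mxE rR.
  have -> : \sum_(r | r \in R1) scale_blocks H R1 cls a r k
              * Num.conj (scale_blocks H R1 cls a r l)
        = a (cls k) * Num.conj (a (cls l)) * col_inner H R1 k l.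
    rewrite /col_inner mulr_sumr; apply: eq_bigr => r rR.
    by rewrite !mxE rR rmorphM /=; rewrite !mulrA; congr (_ * _); rewrite -!mulrA; congr (_ * _); rewrite mulrC.
  have [e|ne] := eqVneq (cls k) (cls l).
    by rewrite -e -normCK Ha expr1n mul1r.
  rewrite /col_inner in orth *; rewrite (orth _ _ ne) mulr0; done.
split=> // i a Ha; apply: main => j; case: ifP => _ //; exact: normr1.
Qed.
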